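(* Let $\mathcal{H}$ be a Hilbert space, $n\ge2$, and let $y_1,\dots,y_n\in\mathcal{H}$ satisfy $\|y_i\|\le1$ for all $i$ and $\|y_i-y_j\|>1/3$ for all $i\ne j$. Let $\mu=\frac1n\sum_{i=1}^n\delta_{y_i}$ and $\mu_n=\frac1n\sum_{i=1}^n\delta_{X_i}$ with $X_1,\dots,X_n$ i.i.d. of law $\mu$. Then $$\mathbb{E}\,W_2(\mu,\mu_n)\ge\mathbb{E}\,W_1(\mu,\mu_n)\ge\frac{1}{12\sqrt2}.$$ Consequently, if $y_1,\dots,y_n$ lie in a subspace of dimension $d$, then $\big(\mathbb{E}\,S_1^2(\mu,\mu_n)\big)^{1/2}\ge\frac{1}{12\sqrt{2d}}$.
   Context: $\Pi(\mu,\nu)$ is the set of couplings of $\mu,\nu$. $W_p(\mu,\nu)=\inf_{\pi\in\Pi(\mu,\nu)}\big(\int\|x-y\|^p\,d\pi(x,y)\big)^{1/p}$ for $p=1,2$, and $S_1(\mu,\nu)=\inf_{\pi\in\Pi(\mu,\nu)}\sup_{\|w\|\le1}\big(\int\langle w,x-y\rangle^2\,d\pi(x,y)\big)^{1/2}$. *)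

(* Defs.v *)
From HB Require Import structures.
From mathcomp Require Import all_boot all_order all_algebra.
From mathcomp Require Import all_classical all_reals all_analysis.
Set Implicit Arguments. Unset Strict Implicit. Unset Printing Implicit Defensive.
Import Order.TTheory GRing.Theory Num.Theory.
Import numFieldNormedType.Exports.
Local Open Scope classical_set_scope.
Local Open Scope ring_scope.

Section Defs.
Variables (R : realType) (V : normedModType R).

(* Together with completeness of V
   (required in the theorem) this makes V a real Hilbert space. *)
Definition is_inner_product (inner : V -> V -> R) : Prop :=
  [/\ forall x y, inner x y = inner y x,
      forall a x y z, inner (a *: x + y) z = a * inner x z + inner y z
    & forall x, `|x| ^+ 2 = inner x x].

(* Finitely supported (Borel) measures on a type T, as lists of
   (mass, atom) pairs; integration of an arbitrary function. *)
Definition dmeas (T : Type) := seq (R * T).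
Definition dint (T : Type) (m : dmeas T) (f : T -> R) : R :=
  \sum_(a <- m) a.1 * f a.2.

Definition coupling (mu nu : dmeas V) (pi : dmeas (V * V)) : Prop :=
  [/\ forall a, a \in pi -> 0 <= a.1,
      forall f : V -> R, dint pi (fun z => f z.1) = dint mu f
    & forall f : V -> R, dint pi (fun z => f z.2) = dint nu f].

(* W_1, W_2 and S_1 (couplings of finitely supported measures are
   finitely supported, so the infima range over all couplings). *)
Definition W1 (mu nu : dmeas V) : R :=
  inf [set c | exists pi, coupling mu nu pi /\
                 c = dint pi (fun z => `|z.1 - z.2|)].

Definition W2 (mu nu : dmeas V) : R :=
  inf [set c | exists pi, coupling mu nu pi /\
                 c = Num.sqrt (dint pi (fun z => `|z.1 - z.2| ^+ 2))].

Definition S1 (inner : V -> V -> R) (mu nu : dmeas V) : R :=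
  inf [set c | exists pi, coupling mu nu pi /\
         c = sup [set s | exists w : V, `|w| <= 1 /\
                   s = Num.sqrt (dint pi (fun z => (inner w (z.1 - z.2)) ^+ 2))]].

Definition unif_meas (n : nat) (y : 'I_n -> V) : dmeas V :=
  [seq (n%:R^-1, y i) | i <- enum 'I_n].

(* Expectation of F(X_1,...,X_n) for X_1..X_n i.i.d. with law
   (1/n) sum_i delta_{y_i}: the index vector (k_1,...,k_n) with X_j = y_{k_j}
   is uniform on 'I_n^n, so E F = n^-n * sum_{k : 'I_n -> 'I_n} F k. *)
Definition Eiid (n : nat) (F : {ffun 'I_n -> 'I_n} -> R) : R :=
  (n%:R ^+ n)^-1 * \sum_(k : {ffun 'I_n -> 'I_n}) F k.

Definition emp_meas (n : nat) (y : 'I_n -> V) (k : {ffun 'I_n -> 'I_n}) : dmeas V :=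
  unif_meas (fun j => y (k j)).

Definition lin_indep (d : nat) (e : 'I_d -> V) : Prop :=
  forall c : 'I_d -> R, \sum_(l < d) c l *: e l = 0 -> forall l, c l = 0.
Definition in_span (d : nat) (e : 'I_d -> V) (x : V) : Prop :=
  exists c : 'I_d -> R, x = \sum_(l < d) c l *: e l.

End Defs.

(* Main.v *)
Require Import Defs.
From HB Require Import structures.
From mathcomp Require Import all_boot all_order all_algebra.
From mathcomp Require Import all_classical all_reals all_analysis.
From mathcomp Require Import ring lra zify.
Import Order.TTheory GRing.Theory Num.Theory.
Import numFieldNormedType.Exports.
Local Open Scope classical_set_scope.
Local Open Scope ring_scope.

Lemma ipS {R : realType} {H : normedModType R} {inner : H -> H -> R} :
  is_inner_product inner -> forall x y, inner x y = inner y x.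
Proof. by case. Qed.

Lemma ipL {R : realType} {H : normedModType R} {inner : H -> H -> R} :
  is_inner_product inner -> forall a x y z, inner (a *: x + y) z = a * inner x z + inner y z.
Proof. by case. Qed.

Lemma ipN2 {R : realType} {H : normedModType R} {inner : H -> H -> R} :
  is_inner_product inner -> forall x, `|x| ^+ 2 = inner x x.
Proof. by case. Qed.

Lemma ip0l {R : realType} {H : normedModType R} {inner : H -> H -> R} :
  is_inner_product inner -> forall z, inner 0 z = 0.
Proof.
move=> hI z; have := ipL hI 1 0 0 z; rewrite scaler0 addr0 mul1r => h.
lra.
Qed.

Lemma ip0r {R : realType} {H : normedModType R} {inner : H -> H -> R} :
  is_inner_product inner -> forall z, inner z 0 = 0.
Proof. by move=> hI z; rewrite (ipS hI) (ip0l hI). Qed.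

Lemma ipDl {R : realType} {H : normedModType R} {inner : H -> H -> R} :
  is_inner_product inner -> forall x y z, inner (x + y) z = inner x z + inner y z.
Proof. by move=> hI x y z; have := ipL hI 1 x y z; rewrite scale1r mul1r. Qed.

Lemma ipZl {R : realType} {H : normedModType R} {inner : H -> H -> R} :
  is_inner_product inner -> forall a x z, inner (a *: x) z = a * inner x z.
Proof. by move=> hI a x z; have := ipL hI a x 0 z; rewrite addr0 (ip0l hI) addr0. Qed.

Lemma ipNl {R : realType} {H : normedModType R} {inner : H -> H -> R} :
  is_inner_product inner -> forall x z, inner (- x) z = - inner x z.
Proof. by move=> hI x z; rewrite -scaleN1r (ipZl hI) mulN1r. Qed.

Lemma ipBl {R : realType} {H : normedModType R} {inner : H -> H -> R} :
  is_inner_product inner -> forall x y z, inner (x - y) z = inner x z - inner y z.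
Proof. by move=> hI x y z; rewrite (ipDl hI) (ipNl hI). Qed.

Lemma ipDr {R : realType} {H : normedModType R} {inner : H -> H -> R} :
  is_inner_product inner -> forall x y z, inner z (x + y) = inner z x + inner z y.
Proof. by move=> hI x y z; rewrite !(ipS hI z) (ipDl hI). Qed.

Lemma ipZr {R : realType} {H : normedModType R} {inner : H -> H -> R} :
  is_inner_product inner -> forall a x z, inner z (a *: x) = a * inner z x.
Proof. by move=> hI a x z; rewrite !(ipS hI z) (ipZl hI). Qed.

Lemma ipBr {R : realType} {H : normedModType R} {inner : H -> H -> R} :
  is_inner_product inner -> forall x y z, inner z (x - y) = inner z x - inner z y.
Proof. by move=> hI x y z; rewrite !(ipS hI z) (ipBl hI). Qed.

Lemma ip_suml {R : realType} {H : normedModType R} {inner : H -> H -> R} :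
  is_inner_product inner -> forall d (c : nat -> R) (u : nat -> H) z,
  inner (\sum_(m < d) c m *: u m) z = \sum_(m < d) c m * inner (u m) z.
Proof.
move=> hI d c u z.
rewrite (big_morph (fun x => inner x z) (fun x y => ipDl hI x y z) (ip0l hI z)).
by apply: eq_bigr => m _; rewrite (ipZl hI).
Qed.

Lemma ip_sumr {R : realType} {H : normedModType R} {inner : H -> H -> R} :
  is_inner_product inner -> forall d (c : nat -> R) (u : nat -> H) z,
  inner z (\sum_(m < d) c m *: u m) = \sum_(m < d) c m * inner z (u m).
Proof.
move=> hI d c u z; rewrite (ipS hI) (ip_suml hI).
by apply: eq_bigr => m _; rewrite (ipS hI).
Qed.

Lemma ip_ge0 {R : realType} {H : normedModType R} {inner : H -> H -> R} :
  is_inner_product inner -> forall x, 0 <= inner x x.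
Proof. by move=> hI x; rewrite -(ipN2 hI) sqr_ge0. Qed.

Lemma ip_eq0 {R : realType} {H : normedModType R} {inner : H -> H -> R} :
  is_inner_product inner -> forall x, inner x x = 0 -> x = 0.
Proof.
move=> hI x; rewrite -(ipN2 hI) => /eqP; rewrite sqrf_eq0 normr_eq0.
by move/eqP.
Qed.

Lemma ip_CS {R : realType} {H : normedModType R} {inner : H -> H -> R} :
  is_inner_product inner -> forall w z, inner w z ^+ 2 <= inner w w * inner z z.
Proof.
move=> hI w z.
have [z0|nz] := eqVneq (inner z z) 0.
  by rewrite (ip_eq0 hI _ z0) !(ip0r hI) mulr0 expr0n.
have zpos : 0 < inner z z by rewrite lt_neqAle eq_sym nz (ip_ge0 hI).
set t := inner w z / inner z z.
have := ip_ge0 hI (w - t *: z).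
rewrite (ipBl hI) !(ipBr hI) !(ipZl hI) !(ipZr hI) (ipS hI z w).
rewrite /t => h.
have e : inner w w - inner w z / inner z z * inner w z -
    (inner w z / inner z z * inner w z - inner w z / inner z z * (inner w z / inner z z * inner z z))
    = inner w w - inner w z ^+ 2 / inner z z.
  by field.
by rewrite e subr_ge0 ler_pdivrMr // in h.
Qed.

Lemma gs {R : realType} {H : normedModType R} {inner : H -> H -> R} :
  is_inner_product inner -> forall (e : nat -> H) d, exists u : nat -> H,
  [/\ forall l, (d <= l)%N -> u l = 0,
      forall l m, l != m -> inner (u l) (u m) = 0,
      forall l, inner (u l) (u l) = 0 \/ inner (u l) (u l) = 1
    & forall l, (l < d)%N -> exists c : nat -> R, e l = \sum_(m < d) c m *: u m].
Proof.
move=> hI e; elim=> [|d [u [u0 uo un us]]].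
  exists (fun _ => 0); split => //.
  - by move=> l m _; rewrite (ip0l hI).
  - by move=> l; left; rewrite (ip0l hI).
set v := e d - \sum_(m < d) inner (u m) (e d) *: u m.
set w := if v == 0 then 0 else `|v|^-1 *: v.
have uv : forall m, inner (u m) v = 0.
  move=> m; case: (ltnP m d) => md; last by rewrite u0 // (ip0l hI).
  rewrite /v (ipBr hI) (ip_sumr hI d (fun m => inner (u m) (e d)) u) (bigD1 (Ordinal md)) //= big1; last first.
    move=> j /eqP jm; rewrite (uo m j) ?mulr0 //; apply/eqP => mj; apply: jm.
    by apply: val_inj; rewrite /= mj.
  rewrite addr0.
  case: (un m) => t; first by rewrite (ip_eq0 hI _ t) !(ip0l hI) mul0r subrr.
  by rewrite t mulr1 subrr.
have uw : forall m, inner (u m) w = 0.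
  by move=> m; rewrite /w; case: ifP => _; rewrite ?(ip0r hI) ?(ipZr hI) ?uv ?mulr0.
have ww : inner w w = 0 \/ inner w w = 1.
  rewrite /w; case: ifP => v0; first by left; rewrite (ip0l hI).
  right; rewrite (ipZl hI) (ipZr hI) -(ipN2 hI) mulrA -expr2 exprVn mulVf //.
  by rewrite expf_neq0 // normr_eq0 v0.
have vw : v = `|v| *: w.
  rewrite /w; case: ifP => v0; first by rewrite scaler0; apply/eqP.
  by rewrite scalerA mulfV ?scale1r // normr_eq0 v0.
exists (fun l => if l == d then w else u l); split.
- move=> l dl; have -> : (l == d) = false by apply/negbTE; rewrite neq_ltn dl orbT.
  by rewrite u0 // ltnW.
- move=> l m lm; case: eqP => ld; case: eqP => md.
  + by case/eqP: lm; rewrite ld md.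
  + by rewrite (ipS hI) uw.
  + by rewrite uw.
  + exact: uo.
- by move=> l; case: eqP.
move=> l; rewrite ltnS leq_eqVlt => /orP [/eqP ->|ld].
  exists (fun m => if m == d then `|v| else inner (u m) (e d)).
  rewrite big_ord_recr /= eqxx -vw /v.
  have -> : \sum_(i < d) (if (widen_ord (leqnSn d) i : nat) == d then `|v| else inner (u (widen_ord (leqnSn d) i)) (e d)) *:
      (if (widen_ord (leqnSn d) i : nat) == d then w else u (widen_ord (leqnSn d) i))
      = \sum_(m < d) inner (u m) (e d) *: u m.
    by apply: eq_bigr => i _; rewrite /= ltn_eqF.
  by rewrite addrC subrK.
have [c ec] := us l ld.
exists (fun m => if m == d then 0 else c m).
rewrite big_ord_recr /= eqxx scale0r addr0 ec.
by apply: eq_bigr => i _; rewrite /= ltn_eqF.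
Qed.

Lemma parseval {R : realType} {H : normedModType R} {inner : H -> H -> R} :
  is_inner_product inner -> forall (u : nat -> H) d (c : nat -> R),
  (forall l m, l != m -> inner (u l) (u m) = 0) ->
  (forall l, inner (u l) (u l) = 0 \/ inner (u l) (u l) = 1) ->
  `|\sum_(m < d) c m *: u m| ^+ 2 = \sum_(m < d) inner (u m) (\sum_(j < d) c j *: u j) ^+ 2.
Proof.
move=> hI u d c uo un.
have key : forall m : 'I_d, inner (u m) (\sum_(j < d) c j *: u j) = c m * inner (u m) (u m).
  move=> m; rewrite (ip_sumr hI) (bigD1 m) //= big1 ?addr0 //.
  move=> j jm; rewrite uo ?mulr0 //; apply/eqP => mj; move/eqP: jm; apply.
  by apply: val_inj.
rewrite (ipN2 hI) (ip_suml hI); apply: eq_bigr => m _; rewrite key.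
by case: (un m) => ->; rewrite ?mulr0 ?expr0n ?mulr1.
Qed.

Lemma jensen {R : realType} {I : eqType} (r : seq I) (m x : I -> R) :
  (forall i, i \in r -> 0 <= m i) -> \sum_(i <- r) m i = 1 ->
  (\sum_(i <- r) m i * x i) ^+ 2 <= \sum_(i <- r) m i * x i ^+ 2.
Proof.
move=> hm h1; set s := \sum_(i <- r) m i * x i.
have : 0 <= \sum_(i <- r) m i * (x i - s) ^+ 2.
  by rewrite big_seq sumr_ge0 // => i ir; rewrite mulr_ge0 ?sqr_ge0 ?hm.
rewrite (eq_bigr (fun i => (m i * x i ^+ 2 - (s *+ 2) * (m i * x i)) + s ^+ 2 * m i)); last first.
  by move=> i _; ring.
rewrite big_split /= sumrB -!mulr_sumr h1 -/s.
move=> h; have : 0 <= \sum_(i <- r) m i * x i ^+ 2 - s ^+ 2 by lra.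
by rewrite subr_ge0.
Qed.

Lemma dint_unif {R : realType} {H : normedModType R} n (y : 'I_n -> H) (f : H -> R) :
  dint (unif_meas y) f = \sum_(i < n) n%:R^-1 * f (y i).
Proof. by rewrite /dint /unif_meas big_map big_enum. Qed.

Definition cpl0 {R : realType} {H : normedModType R} {n} (y : 'I_n -> H)
  (k : {ffun 'I_n -> 'I_n}) : dmeas R (H * H) :=
  [seq (n%:R^-1, (y i, y (k i))) | i <- enum 'I_n].

Lemma cpl0_ok {R : realType} {H : normedModType R} n (y : 'I_n -> H) k :
  coupling (unif_meas y) (emp_meas y k) (cpl0 y k).
Proof.
split.
- by move=> a /mapP [i _ ->] /=; rewrite invr_ge0 ler0n.
- by move=> f; rewrite dint_unif /dint /cpl0 big_map big_enum.
- by move=> f; rewrite /emp_meas dint_unif /dint /cpl0 big_map big_enum.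
Qed.

Lemma mass1 {R : realType} {H : normedModType R} n (y : 'I_n -> H) nu pi :
  (0 < n)%N -> coupling (unif_meas y) nu pi -> \sum_(a <- pi) a.1 = 1.
Proof.
move=> n0 [_ h _]; have := h (fun _ => 1); rewrite dint_unif /dint.
under eq_bigr do rewrite mulr1.
under [X in _ = X -> _]eq_bigr do rewrite mulr1.
move=> ->; rewrite sumr_const card_ord -[_ *+ n]mulr_natr mulVf //.
by rewrite pnatr_eq0 -lt0n.
Qed.

Lemma W1_le_W2 {R : realType} {H : normedModType R} n (y : 'I_n -> H) k :
  (0 < n)%N -> W1 (unif_meas y) (emp_meas y k) <= W2 (unif_meas y) (emp_meas y k).
Proof.
move=> n0; apply: lb_le_inf.
  by exists (Num.sqrt (dint (cpl0 y k) (fun z => `|z.1 - z.2| ^+ 2))), (cpl0 y k); split => //; exact: cpl0_ok.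
move=> c [pi [cp ->]].
have lb : has_lbound [set c | exists pi, coupling (unif_meas y) (emp_meas y k) pi /\
                 c = dint pi (fun z => `|z.1 - z.2|)].
  exists 0 => c' [pi' [[h1 _ _] ->]].
  by rewrite /dint big_seq sumr_ge0 // => a ap; rewrite mulr_ge0 ?h1.
apply: le_trans (ge_inf lb (ex_intro _ pi (conj cp erefl))) _.
have hm : forall a, a \in pi -> 0 <= a.1 by case: cp.
have := @jensen _ _ pi (fun a => a.1) (fun a => `|a.2.1 - a.2.2|) hm (mass1 _ _ _ _ n0 cp).
rewrite -(@ler_sqrt _ _ (\sum_(i <- pi) i.1 * `|i.2.1 - i.2.2| ^+ 2)); last first.
  by rewrite big_seq sumr_ge0 // => a ap; rewrite mulr_ge0 ?hm ?sqr_ge0.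
rewrite sqrtr_sqr => h; apply: le_trans h; exact: ler_norm.
Qed.

Definition phi {R : realType} {H : normedModType R} (pts : seq H) (x : H) : R :=
  foldr (fun p acc => Num.min `|x - p| acc) 3^-1 pts.

Lemma phi_lip {R : realType} {H : normedModType R} (pts : seq H) a b :
  phi pts a <= phi pts b + `|a - b|.
Proof.
elim: pts => [|p s IH] /=; first by rewrite /phi /= lerDl.
rewrite /phi /= -/(phi s a) -/(phi s b).
rewrite [Num.min `|b - p| _]minElt; case: ifP => _; rewrite ge_min.
- apply/orP; left.
  have -> : a - p = (a - b) + (b - p) by rewrite addrA subrK.
  by rewrite addrC (le_trans (ler_normD _ _)).
- by rewrite IH orbT.
Qed.

Lemma phi_le {R : realType} {H : normedModType R} (pts : seq H) x p :
  p \in pts -> phi pts x <= `|x - p|.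
Proof.
elim: pts => [|q s IH] //=; rewrite inE => /orP [/eqP ->|ps].
  by rewrite /phi /= ge_min lexx.
by rewrite /phi /= -/(phi s x) ge_min IH ?orbT.
Qed.

Lemma phi_ge {R : realType} {H : normedModType R} (pts : seq H) x (t : R) :
  t <= 3^-1 -> (forall p, p \in pts -> t <= `|x - p|) -> t <= phi pts x.
Proof.
move=> t3; elim: pts => [|q s IH] //= h.
rewrite /phi /= -/(phi s x) le_min h ?mem_head //= IH // => p ps.
by apply: h; rewrite inE ps orbT.
Qed.

Definition cnt {R : realType} {n} (k : {ffun 'I_n -> 'I_n}) : R :=
  \sum_(i < n) (if [forall j, k j != i] then 1 else 0).

Lemma W1_lb {R : realType} {H : normedModType R} n (y : 'I_n -> H) k :
  (forall i j, i != j -> 3^-1 < `|y i - y j|) ->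
  n%:R^-1 * (3^-1 * cnt k) <= W1 (unif_meas y) (emp_meas y k).
Proof.
move=> hy; apply: lb_le_inf.
  by exists (dint (cpl0 y k) (fun z => `|z.1 - z.2|)), (cpl0 y k); split => //; exact: cpl0_ok.
move=> c [pi [[hm h1 h2] ->]].
set pts := [seq y (k j) | j <- enum 'I_n].
have step : dint pi (fun z => phi pts z.1) - dint pi (fun z => phi pts z.2)
    <= dint pi (fun z => `|z.1 - z.2|).
  rewrite /dint -sumrB big_seq [X in _ <= X]big_seq; apply: ler_sum => a ap.
  rewrite -mulrBr ler_wpM2l ?hm //; have := phi_lip pts a.2.1 a.2.2; lra.
rewrite (h1 (phi pts)) (h2 (phi pts)) in step.
apply: le_trans step.
have hnu : dint (emp_meas y k) (phi pts) <= 0.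
  rewrite /emp_meas dint_unif; apply: sumr_le0 => i _.
  rewrite mulr_ge0_le0 ?invr_ge0 ?ler0n //.
  have ip : y (k i) \in pts by apply: (map_f (fun j => y (k j))); rewrite mem_enum.
  by apply: (le_trans (phi_le _ _ _ ip)); rewrite subrr normr0.
have hmu : n%:R^-1 * (3^-1 * cnt k) <= dint (unif_meas y) (phi pts).
  rewrite dint_unif /cnt !mulr_sumr; apply: ler_sum => i _.
  rewrite ler_wpM2l ?invr_ge0 ?ler0n //.
  case: forallP => hi; rewrite ?mulr1 ?mulr0.
  - apply: phi_ge => // p /mapP [j _ ->]; apply: ltW; apply: hy.
    by rewrite eq_sym; apply: hi.
  - apply: phi_ge; first by rewrite invr_ge0.
    by move=> p _; exact: normr_ge0.
lra.
Qed.

Lemma sum_cnt {R : realType} n :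
  \sum_(k : {ffun 'I_n -> 'I_n}) (cnt k : R) = n%:R * ((n.-1) ^ n)%:R.
Proof.
rewrite /cnt exchange_big /=.
rewrite (eq_bigr (fun _ => ((n.-1) ^ n)%:R)); last first.
  move=> i _; rewrite -big_mkcond /= sumr_const.
  have e := card_ffun_on 'I_n (predC1 i); rewrite cardC1 !card_ord in e.
  rewrite -e; congr (_%:R); apply: eq_card => f; rewrite !inE.
by rewrite sumr_const card_ord mulr_natl.
Qed.


Local Open Scope nat_scope.
Lemma bern (m n : nat) : (m ^ n.+1 + n.+1 * m ^ n <= (m.+1) ^ n.+1)%N.
Proof.
elim: n => [|n IH]; first by rewrite expn1 expn0 muln1 expn1 addn1.
rewrite [m.+1 ^ n.+2]expnS [m ^ n.+2]expnS [m ^ n.+1]expnS.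
rewrite [m ^ n.+1]expnS in IH.
move: IH; set a := m ^ n; set P := m.+1 ^ n.+1 => IH.
nia.
Qed.

Lemma step (p : nat) : ((p.+2) ^ p.+2 * p ^ p.+1 <= (p.+1) ^ (p.+1 + p.+2))%N.
Proof.
have e1 : (p.+2) ^ p.+2 * p ^ p.+1 = p.+2 * (p * p.+2) ^ p.+1.
  rewrite expnMn [p.+2 ^ p.+2]expnS; set x := p ^ p.+1; set z := p.+2 ^ p.+1; nia.
have e2 : (p.+1) ^ (p.+1 + p.+2) = p.+1 * ((p * p.+2).+1) ^ p.+1.
  have -> : (p * p.+2).+1 = p.+1 ^ 2 by nia.
  by rewrite -expnM -expnS; congr (_ ^ _); lia.
rewrite e1 e2.
have B := bern (p * p.+2) p.
move: B; set m := p * p.+2; set a := m ^ p; set P := m.+1 ^ p.+1.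
rewrite [m ^ p.+1]expnS -/a => B.
have hm : m <= p.+1 * p.+1 by rewrite /m; nia.
nia.
Qed.

Lemma four (n : nat) : (2 <= n)%N -> (n ^ n <= 4 * (n.-1) ^ n)%N.
Proof.
case: n => [|[|p]] // _; elim: p => [|p IH] //=.
have S := step p.+1.
have pos : 0 < p.+2 ^ p.+2 by rewrite expn_gt0.
rewrite -(leq_pmul2r pos).
apply: (@leq_trans (p.+3 ^ p.+3 * (4 * p.+1 ^ p.+2))).
  by rewrite leq_mul2l IH orbT.
rewrite expnD in S.
move: S; set A := p.+3 ^ p.+3; set B := p.+1 ^ p.+2; set C := p.+2 ^ p.+2; set D := p.+2 ^ p.+3.
nia.
Qed.
Local Close Scope nat_scope.

Lemma sum_eq0_seq {R : realType} {I : eqType} (r : seq I) (F : I -> R) :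
  (forall i, i \in r -> 0 <= F i) -> \sum_(i <- r) F i = 0 ->
  forall i, i \in r -> F i = 0.
Proof.
elim: r => [|a r IH] // h; rewrite big_cons => hs i.
have ha : 0 <= F a by apply: h; rewrite mem_head.
have hr : 0 <= \sum_(j <- r) F j.
  by rewrite big_seq sumr_ge0 // => j jr; apply: h; rewrite inE jr orbT.
have Fa : F a = 0 by lra.
rewrite inE => /orP [/eqP ->|ir] //.
apply: IH ir; last by lra.
by move=> j jr; apply: h; rewrite inE jr orbT.
Qed.

Definition spanu {R : realType} {H : normedModType R} (u : nat -> H) d (x : H) : Prop :=
  exists c : nat -> R, x = \sum_(m < d) c m *: u m.

Lemma spanu0 {R : realType} {H : normedModType R} (u : nat -> H) d : spanu u d 0.
Proof. by exists (fun _ => 0); rewrite big1 // => m _; rewrite scale0r. Qed.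

Lemma spanuD {R : realType} {H : normedModType R} (u : nat -> H) d x z :
  spanu u d x -> spanu u d z -> spanu u d (x + z).
Proof.
move=> [c ->] [c' ->]; exists (fun m => c m + c' m).
by rewrite -big_split; apply: eq_bigr => m _; rewrite scalerDl.
Qed.

Lemma spanuZ {R : realType} {H : normedModType R} (u : nat -> H) d a x :
  spanu u d x -> spanu u d (a *: x).
Proof.
move=> [c ->]; exists (fun m => a * c m).
by rewrite scaler_sumr; apply: eq_bigr => m _; rewrite scalerA.
Qed.

Lemma spanuB {R : realType} {H : normedModType R} (u : nat -> H) d x z :
  spanu u d x -> spanu u d z -> spanu u d (x - z).
Proof. by move=> hx hz; apply: spanuD => //; rewrite -scaleN1r; apply: spanuZ. Qed.

Lemma W1_ge0 {R : realType} {H : normedModType R} n (y : 'I_n -> H) k :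
  0 <= W1 (unif_meas y) (emp_meas y k).
Proof.
apply: lb_le_inf.
  by exists (dint (cpl0 y k) (fun z => `|z.1 - z.2|)), (cpl0 y k); split => //; exact: cpl0_ok.
move=> c [pi [[hm _ _] ->]].
by rewrite /dint big_seq sumr_ge0 // => a ap; rewrite mulr_ge0 ?hm.
Qed.

Lemma supp_span {R : realType} {H : normedModType R} n (y : 'I_n -> H) (nu : dmeas R H)
   (P : H -> Prop) (pi : dmeas R (H * H)) :
  (forall a, a \in pi -> 0 <= a.1) ->
  (forall f : H -> R, dint pi (fun z => f z.1) = dint (unif_meas y) f) ->
  (forall i, P (y i)) ->
  forall a, a \in pi -> a.1 != 0 -> P a.2.1.
Proof.
move=> hm h1 hy.
pose f := fun x : H => if `[< P x >] then 0 else 1 : R.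
have := h1 f; rewrite dint_unif big1; last first.
  by move=> i _; rewrite /f asboolT ?mulr0.
rewrite /dint => h a ap a0.
have pos : forall b, b \in pi -> 0 <= b.1 * f b.2.1.
  by move=> b bp; rewrite mulr_ge0 ?hm // /f; case: asboolP.
have := @sum_eq0_seq _ _ pi (fun a => a.1 * f a.2.1) pos h a ap.
rewrite /f; case: asboolP => // _; rewrite mulr1 => e.
by move: a0; rewrite e eqxx.
Qed.

Lemma supp_span2 {R : realType} {H : normedModType R} n (y : 'I_n -> H) (nu : dmeas R H)
   (P : H -> Prop) (pi : dmeas R (H * H)) :
  (forall a, a \in pi -> 0 <= a.1) ->
  (forall f : H -> R, dint pi (fun z => f z.2) = dint (unif_meas y) f) ->
  (forall i, P (y i)) ->
  forall a, a \in pi -> a.1 != 0 -> P a.2.2.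
Proof.
move=> hm h1 hy.
pose f := fun x : H => if `[< P x >] then 0 else 1 : R.
have := h1 f; rewrite dint_unif big1; last first.
  by move=> i _; rewrite /f asboolT ?mulr0.
rewrite /dint => h a ap a0.
have pos : forall b, b \in pi -> 0 <= b.1 * f b.2.2.
  by move=> b bp; rewrite mulr_ge0 ?hm // /f; case: asboolP.
have := @sum_eq0_seq _ _ pi (fun a => a.1 * f a.2.2) pos h a ap.
rewrite /f; case: asboolP => // _; rewrite mulr1 => e.
by move: a0; rewrite e eqxx.
Qed.

Lemma S1_lb {R : realType} {H : normedModType R} {inner : H -> H -> R} :
  is_inner_product inner -> forall n (y : 'I_n -> H) k (u : nat -> H) d,
  (0 < n)%N -> (0 < d)%N ->
  (forall l m, l != m -> inner (u l) (u m) = 0) ->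
  (forall l, inner (u l) (u l) = 0 \/ inner (u l) (u l) = 1) ->
  (forall i, spanu u d (y i)) ->
  Num.sqrt (d%:R^-1 * W1 (unif_meas y) (emp_meas y k) ^+ 2)
    <= S1 inner (unif_meas y) (emp_meas y k).
Proof.
move=> hI n y k u d n0 d0 uo un sy.
have W0 := W1_ge0 n y k.
apply: lb_le_inf.
  eexists; exists (cpl0 y k); split; [exact: cpl0_ok | reflexivity].
move=> c [pi [cp ->]].
have hm : forall a, a \in pi -> 0 <= a.1 by case: cp.
set T := [set s | exists w : H, `|w| <= 1 /\ _].
set Z := \sum_(a <- pi) a.1 * `|a.2.1 - a.2.2| ^+ 2.
have Z0 : 0 <= Z by rewrite /Z big_seq sumr_ge0 // => a ap; rewrite mulr_ge0 ?hm ?sqr_ge0.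
have Tub : has_ubound T.
  exists (Num.sqrt Z) => s [w [w1 ->]]; rewrite ler_sqrt //.
  rewrite /dint /Z big_seq [X in _ <= X]big_seq; apply: ler_sum => a ap.
  rewrite ler_wpM2l ?hm //.
  apply: (le_trans (ip_CS hI _ _)); rewrite -!(ipN2 hI).
  rewrite -[X in _ <= X]mul1r ler_wpM2r ?sqr_ge0 //.
  by rewrite expr_le1 // normr_ge0.
have Tl : forall l, Num.sqrt (\sum_(a <- pi) a.1 * inner (u l) (a.2.1 - a.2.2) ^+ 2) <= sup T.
  move=> l; apply: (ub_le_sup Tub); exists (u l); split => //.
  have : `|u l| ^+ 2 <= 1 by rewrite (ipN2 hI); case: (un l) => ->.
  by rewrite expr_le1 // normr_ge0.
have sup0 : 0 <= sup T := le_trans (sqrtr_ge0 _) (Tl 0%N).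
have supp : forall a, a \in pi -> a.1 != 0 -> spanu u d (a.2.1 - a.2.2).
  case: cp => _ h1 h2 a ap a0; apply: spanuB.
    exact: (@supp_span _ _ n y (emp_meas y k) (spanu u d) pi hm h1 sy a ap a0).
  exact: (@supp_span2 _ _ n (fun j => y (k j)) (emp_meas y k) (spanu u d) pi hm h2 (fun i => sy (k i)) a ap a0).
have Zeq : Z = \sum_(l < d) \sum_(a <- pi) a.1 * inner (u l) (a.2.1 - a.2.2) ^+ 2.
  rewrite exchange_big /Z big_seq [X in _ = X]big_seq; apply: eq_bigr => a ap.
  rewrite -mulr_sumr; have [->|a0] := eqVneq a.1 0; first by rewrite !mul0r.
  have [cc ec] := supp a ap a0; rewrite ec (parseval hI u d cc uo un).
  by [].
have Zle : Z <= d%:R * sup T ^+ 2.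
  rewrite Zeq; apply: (le_trans (_ : _ <= \sum_(l < d) sup T ^+ 2)); last first.
    by rewrite sumr_const card_ord mulr_natl.
  apply: ler_sum => l _.
  set Q := \sum_(a <- pi) _.
  have Q0 : 0 <= Q by rewrite /Q big_seq sumr_ge0 // => a ap; rewrite mulr_ge0 ?hm ?sqr_ge0.
  rewrite -(sqr_sqrtr Q0); have := Tl l; have := sqrtr_ge0 Q; rewrite -/Q; nra.
have lb : has_lbound [set c | exists pi, coupling (unif_meas y) (emp_meas y k) pi /\
                 c = dint pi (fun z => `|z.1 - z.2|)].
  exists 0 => c' [pi' [[h1 _ _] ->]].
  by rewrite /dint big_seq sumr_ge0 // => a ap; rewrite mulr_ge0 ?h1.
have W1le := ge_inf lb (ex_intro _ pi (conj cp erefl)).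
have J := @jensen _ _ pi (fun a => a.1) (fun a => `|a.2.1 - a.2.2|) hm (mass1 _ _ _ _ n0 cp).
rewrite -/Z in J.
move: W1le; rewrite -/(W1 (unif_meas y) (emp_meas y k)) => W1le.
have dpos : 0 < d%:R :> R by rewrite ltr0n.
rewrite -[sup T](ger0_norm sup0) -sqrtr_sqr ler_sqrt ?sqr_ge0 //.
apply: (le_trans (_ : _ <= d%:R^-1 * (d%:R * sup T ^+ 2))).
  rewrite ler_wpM2l ?invr_ge0 ?ler0n //; apply: le_trans Zle.
  apply: le_trans J; move: W1le; rewrite /dint; nra.
by rewrite mulrA mulVf ?mul1r // gt_eqF.
Qed.

Theorem mainTheorem10 (R : realType) (H : completeNormedModType R)
    (inner : H -> H -> R) (n : nat) (y : 'I_n -> H) :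
  is_inner_product inner ->
  (2 <= n)%N ->
  (forall i, `|y i| <= 1) ->
  (forall i j, i != j -> 3^-1 < `|y i - y j|) ->
  [/\ Eiid (fun k => W1 (unif_meas y) (emp_meas y k))
        <= Eiid (fun k => W2 (unif_meas y) (emp_meas y k)),
      (12 * Num.sqrt 2)^-1 <= Eiid (fun k => W1 (unif_meas y) (emp_meas y k))
    & forall (d : nat) (e : 'I_d -> H),
        lin_indep e -> (forall i, in_span e (y i)) ->
        (12 * Num.sqrt (2 * d%:R))^-1
          <= Num.sqrt (Eiid (fun k => S1 inner (unif_meas y) (emp_meas y k) ^+ 2))].
Proof.
move=> hI n2 hy1 hy.
have n0 : (0 < n)%N by apply: leq_trans n2.
have Npos : 0 < n%:R ^+ n :> R by rewrite exprn_gt0 // ltr0n.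
have Emono : forall F G : {ffun 'I_n -> 'I_n} -> R, (forall k, F k <= G k) -> Eiid F <= Eiid G.
  move=> F G h; rewrite /Eiid; apply: ler_wpM2l; first by rewrite invr_ge0 ltW.
  by apply: ler_sum => k _; exact: h.
have c0 : 0 < (12 * Num.sqrt 2)^-1 :> R by rewrite invr_gt0 mulr_gt0 ?sqrtr_gt0 ?ltr0n.
have hE1 : (12 * Num.sqrt 2)^-1 <= Eiid (fun k => W1 (unif_meas y) (emp_meas y k)).
  apply: le_trans (Emono _ _ (fun k => W1_lb n y k hy)).
  rewrite /Eiid -mulr_sumr -mulr_sumr sum_cnt.
  set a := n%:R; set b := ((n.-1)^n)%:R; set N := a ^+ n.
  have hb : N <= 4 * b.
    by have := four n n2; rewrite -(ler_nat R) natrM natrX.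
  have a0 : a != 0 by rewrite pnatr_eq0 -lt0n.
  have N0 : N != 0 by rewrite gt_eqF.
  have -> : N^-1 * (a^-1 * (3^-1 * (a * b))) = b / (3 * N).
    by field; apply/andP.
  apply: (le_trans (_ : _ <= 12^-1)).
    have s2 : 1 <= Num.sqrt 2 :> R by rewrite -{1}sqrtr1 ler_sqrt; lra.
    have s0 : Num.sqrt 2 != 0 :> R by rewrite gt_eqF // sqrtr_gt0 ltr0n.
    have -> : 12^-1 = (12 * Num.sqrt 2)^-1 + (Num.sqrt 2 - 1) / (12 * Num.sqrt 2) :> R.
      by field.
    by rewrite lerDl divr_ge0 ?subr_ge0 // mulr_ge0 ?ler0n ?sqrtr_ge0.
  have -> : b / (3 * N) = 12^-1 + (4 * b - N) / (12 * N).
    by field.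
  by rewrite lerDl divr_ge0 ?subr_ge0 // mulr_ge0 ?ler0n // ltW.
split => //.
  by apply: Emono => k; exact: W1_le_W2.
case=> [|d] e li sp.
  by rewrite mulr0 sqrtr0 mulr0 invr0 sqrtr_ge0.
pose e' := fun l : nat => e (inord l).
have [u [u0 uo un us]] := gs hI e' d.+1.
have sy : forall i, spanu u d.+1 (y i).
  move=> i; have [c ->] := sp i.
  apply: (big_ind (spanu u d.+1)); [exact: spanu0 | exact: spanuD |].
  move=> l _; apply: spanuZ; have [c' ec'] := us l (ltn_ord l); exists c'.
  by rewrite -ec' /e' inord_val.
have hS := fun k => S1_lb hI n y k u d.+1 n0 isT uo un sy.
set D := (d.+1)%:R : R.
have Dpos : 0 < D by rewrite ltr0n.
set W := fun k => W1 (unif_meas y) (emp_meas y k).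
have step1 : Eiid (fun k => D^-1 * W k ^+ 2)
    <= Eiid (fun k => S1 inner (unif_meas y) (emp_meas y k) ^+ 2).
  apply: Emono => k.
  have h0 : 0 <= D^-1 * W k ^+ 2 by rewrite mulr_ge0 ?sqr_ge0 // invr_ge0 ltW.
  rewrite -(sqr_sqrtr h0); have := hS k; have := sqrtr_ge0 (D^-1 * W k ^+ 2).
  rewrite /W; nra.
have step2 : Eiid (fun k => D^-1 * W k ^+ 2) = D^-1 * Eiid (fun k => W k ^+ 2).
  by rewrite /Eiid -mulr_sumr mulrCA.
have step3 : Eiid W ^+ 2 <= Eiid (fun k => W k ^+ 2).
  rewrite /Eiid !mulr_sumr; apply: jensen.
    by move=> k _; rewrite invr_ge0 ltW.
  rewrite sumr_const card_ffun !card_ord -[_ *+ _]mulr_natr natrX mulVf //.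
  by rewrite gt_eqF.
have step4 : ((12 * Num.sqrt 2)^-1) ^+ 2 <= Eiid W ^+ 2.
  have := hE1; rewrite -/W => h; nra.
have L : ((12 * Num.sqrt (2 * D))^-1) ^+ 2 = D^-1 * ((12 * Num.sqrt 2)^-1) ^+ 2.
  rewrite !exprVn !exprMn !sqr_sqrtr ?mulr_ge0 ?ler0n ?ltW //.
  by field; rewrite gt_eqF.
have L0 : 0 <= (12 * Num.sqrt (2 * D))^-1 by rewrite invr_ge0 mulr_ge0 ?sqrtr_ge0 ?ler0n.
rewrite -[X in X <= _](ger0_norm L0) -sqrtr_sqr ler_sqrt; last first.
  apply: le_trans step1; rewrite /Eiid; apply: mulr_ge0; first by rewrite invr_ge0 ltW.
  by apply: sumr_ge0 => k _; rewrite mulr_ge0 ?sqr_ge0 // invr_ge0 ltW.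
rewrite L; apply: le_trans step1; rewrite step2; apply: ler_wpM2l.
  by rewrite invr_ge0 ltW.
exact: le_trans step4 step3.
Qed.
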